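(* Let $n\ge5$, let $G$ and $H$ be non-trivial groups, let $\sigma\colon G\to S_n$ be a surjective homomorphism, and let $W=H\wr_\sigma G=H^n\rtimes_\sigma G$. Then the following are equivalent: ($\ast$) every abelian normal subgroup of $W$ is contained in $H^n$ (identified with $\{(\mathbf h,1)\}$); ($\ast\ast$) $\ker\sigma$ contains no non-trivial abelian normal subgroup of $G$.
   Context: For $n\ge2$, groups $G,H$ and a homomorphism $\sigma\colon G\to S_n$, $H\wr_\sigma G=H^n\rtimes_\sigma G$ is the semidirect product in which $G$ acts on $H^n$ by permuting coordinates through $\sigma$: $g\cdot(h_1,\dots,h_n)=(h_{\sigma(g)(1)},\dots,h_{\sigma(g)(n)})$ (with the composition convention in $S_n$ making this a left action); elements are pairs $(\mathbf h,g)$ with $(\mathbf h,g)(\mathbf k,x)=(\mathbf h\cdot g\mathbf k,gx)$. *)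

(* Defs.v *)
From mathcomp Require Import all_boot all_fingroup.
Set Implicit Arguments. Unset Strict Implicit. Unset Printing Implicit Defensive.

Record AbsGroup := {
  gcar :> Type;
  gmul : gcar -> gcar -> gcar;
  gone : gcar;
  ginv : gcar -> gcar;
  gmulA : forall x y z, gmul x (gmul y z) = gmul (gmul x y) z;
  gmul1 : forall x, gmul gone x = x;
  gmulV : forall x, gmul (ginv x) x = gone
}.

Section Notions.
Variables (T : Type) (mul : T -> T -> T) (one : T) (inv : T -> T).

Definition is_subgroup (N : T -> Prop) : Prop :=
  N one /\ (forall x y, N x -> N y -> N (mul x y)) /\ (forall x, N x -> N (inv x)).

Definition is_normal_subgroup (N : T -> Prop) : Prop :=
  is_subgroup N /\ (forall g x, N x -> N (mul (mul g x) (inv g))).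

Definition is_abelian (N : T -> Prop) : Prop :=
  forall x y, N x -> N y -> mul x y = mul y x.
End Notions.

Definition nontrivial (G : AbsGroup) : Prop := exists x : G, x <> gone G.

(* sigma : G -> S_n is a homomorphism (mathcomp convention: (s * t) i = t (s i)) *)
Definition is_hom (G : AbsGroup) (n : nat) (sigma : G -> {perm 'I_n}) : Prop :=
  forall x y, sigma (gmul x y) = (sigma x * sigma y)%g.

Section Wreath.
Variables (H G : AbsGroup) (n : nat) (sigma : G -> {perm 'I_n}).

(* g . (h_1,...,h_n) = (h_{sigma(g)(1)}, ..., h_{sigma(g)(n)});
   with mathcomp's composition convention this is a left action. *)
Definition wact (g : G) (h : {ffun 'I_n -> H}) : {ffun 'I_n -> H} :=
  [ffun i => h (sigma g i)].

Definition wr_type := ({ffun 'I_n -> H} * G)%type.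

Definition wr_mul (a b : wr_type) : wr_type :=
  ([ffun i => gmul (a.1 i) (wact a.2 b.1 i)], gmul a.2 b.2).

Definition wr_one : wr_type := ([ffun => gone H], gone G).

Definition wr_inv (a : wr_type) : wr_type :=
  (wact (ginv a.2) [ffun i => ginv (a.1 i)], ginv a.2).
End Wreath.

(* Main.v *)
Require Import Defs.
From mathcomp Require Import all_boot all_fingroup.
From mathcomp Require Import zify.
Set Implicit Arguments. Unset Strict Implicit. Unset Printing Implicit Defensive.

Lemma sym_key n (K : {perm 'I_n} -> Prop) p i k l :
  (forall p r, K p -> K (r * p * r^-1)%g) -> (forall p q, K p -> K q -> (p*q = q*p)%g) -> K p ->
  p i != i -> k != i -> k != p i -> l != i -> l != p i -> k != l ->
  p k = tperm (p i) k (tperm k l (p l)).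
Proof.
move=> HK Hc Kp pi ki kj li lj kl.
pose r := (tperm (p i) k * tperm k l)%g.
have := congr1 (fun s : {perm 'I_n} => s i) (Hc _ _ Kp (HK p r Kp)).
rewrite /r invMg !tpermV /= !permM.
rewrite (tpermD pi ki) (tpermD ki li) (tpermD kj lj) !tpermL.
by move=> ->.
Qed.

Lemma aux n (p : {perm 'I_n}) i k l :
  p k = tperm (p i) k (tperm k l (p l)) -> k != l -> l != i -> (p l == k) || (p l == l).
Proof.
move=> E kl li; case: (tpermP k l (p l)) E => [->|->|nk nl]; rewrite ?eqxx ?orbT //.
have h1 : p i != p l by rewrite (inj_eq perm_inj) eq_sym.
have h2 : k != p l by apply/eqP => e; apply: nk.
rewrite (tpermD h1 h2) => /perm_inj e.
by move: kl; rewrite e eqxx.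
Qed.

Lemma sym_abnorm n (K : {perm 'I_n} -> Prop) :
  5 <= n ->
  (forall p r, K p -> K (r * p * r^-1)%g) -> (forall p q, K p -> K q -> (p*q = q*p)%g) ->
  forall p, K p -> p = 1%g.
Proof.
move=> n5 HK Hc p Kp; apply/permP => i; rewrite perm1.
apply/eqP; apply: contraT => pi.
pose S := ~: [set i; p i].
have cS : 2 < #|S|.
  have := cardsC [set i; p i]; rewrite cards2 card_ord; rewrite eq_sym pi /= /S; lia.
have [l lS] : exists l, l \in S by apply/card_gt0P; lia.
have [k1 k1S] : exists k, k \in S :\ l by apply/card_gt0P; rewrite (cardsD1 l S) lS in cS; lia.
have [k2 k2S] : exists k, k \in S :\ l :\ k1.
  apply/card_gt0P; rewrite (cardsD1 l S) lS in cS; rewrite (cardsD1 k1 (S :\ l)) k1S in cS; lia.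
move: k2S k1S lS; rewrite !inE !negb_or => /and3P[k21 k2l /andP[k2i k2j]] /and3P[k1l k1i k1j] /andP[li lj].
have E1 := sym_key HK Hc Kp pi k1i k1j li lj k1l.
have E2 := sym_key HK Hc Kp pi k2i k2j li lj k2l.
have pll : p l = l.
  have := aux E1 k1l li; have := aux E2 k2l li.
  case/orP => /eqP e2; case/orP => /eqP e1 //.
  by move: k21; rewrite -e1 -e2 eqxx.
move: E1; rewrite pll tpermR tpermR => /perm_inj e.
by move: k1i; rewrite e eqxx.
Qed.

Section AG.
Variable G : AbsGroup.
Lemma gmulVr (x : G) : gmul x (ginv x) = gone G.
Proof.
rewrite -[gmul x _]gmul1 -{1}(gmulV (ginv x)) -gmulA (gmulA (ginv x)) gmulV gmul1.
exact: gmulV.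
Qed.
Lemma gmulr1 (x : G) : gmul x (gone G) = x.
Proof. by rewrite -(gmulV x) gmulA gmulVr gmul1. Qed.
Lemma ginv1 : ginv (gone G) = gone G.
Proof. by rewrite -[ginv _]gmulr1 gmulV. Qed.
End AG.

Lemma hom1 (G : AbsGroup) n (sigma : G -> {perm 'I_n}) : is_hom sigma -> sigma (gone G) = 1%g.
Proof.
move=> hs; have := hs (gone G) (gone G); rewrite gmul1 => e.
by apply: (mulgI (sigma (gone G))); rewrite -e mulg1.
Qed.

Lemma homV (G : AbsGroup) n (sigma : G -> {perm 'I_n}) x : is_hom sigma -> sigma (ginv x) = ((sigma x)^-1)%g.
Proof.
move=> hs; apply: (mulgI (sigma x)); rewrite -hs gmulVr hom1 // mulgV //.
Qed.

Theorem theorem3p7 (n : nat) (G H : AbsGroup) (sigma : G -> {perm 'I_n}) :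
  5 <= n -> nontrivial G -> nontrivial H ->
  is_hom sigma -> (forall p : {perm 'I_n}, exists g : G, sigma g = p) ->
  ((forall N : wr_type H G n -> Prop,
      is_normal_subgroup (wr_mul sigma) (wr_one H G n) (wr_inv sigma) N ->
      is_abelian (wr_mul sigma) N ->
      forall w, N w -> w.2 = gone G)
   <->
   (forall N : G -> Prop,
      is_normal_subgroup (@gmul G) (gone G) (@ginv G) N ->
      is_abelian (@gmul G) N ->
      (forall x, N x -> sigma x = 1%g) ->
      forall x, N x -> x = gone G)).
Proof.
move=> n5 _ _ hs sur; split.
- move=> hW N [[N1 [NM NV]] NJ] Nab Nker x Nx.
  pose N' := fun w : wr_type H G n => w.1 = [ffun => gone H] /\ N w.2.
  have wc : forall g, wact sigma g [ffun => gone H] = [ffun => gone H].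
    by move=> g; apply/ffunP => i; rewrite !ffunE.
  apply: (hW N' _ _ (([ffun => gone H], x))) => //.
  + split; first split; first by split.
    * split.
      - move=> [f1 a] [f2 b] [/= -> Na] [/= -> Nb]; split; last exact: NM.
        by apply/ffunP => i; rewrite /wr_mul /= !ffunE gmul1.
      - move=> [f1 a] [/= -> Na]; split; last exact: NV.
        rewrite /wr_inv /=.
        by apply/ffunP => i; rewrite !ffunE ginv1.
    * move=> [h y] [f a] [/= -> Na]; split; last exact: NJ.
      apply/ffunP => i; rewrite /wr_mul /wr_inv /= !ffunE.
      rewrite gmulr1 (hs y a) (Nker a Na) mulg1 -permM -hs gmulVr hom1 // perm1.
      exact: gmulVr.
  + move=> [f1 a] [f2 b] [/= -> Na] [/= -> Nb].
    by rewrite /wr_mul /= !wc (Nab a b).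
- move=> hG A [[A1 [AM AV]] AJ] Aab w Aw.
  pose M := fun g : G => exists f, A (f, g).
  have Msub : is_normal_subgroup (@gmul G) (gone G) (@ginv G) M.
    split; first split; first by exists [ffun => gone H].
    + split.
      * move=> a b [f1 A1'] [f2 A2']; eexists; exact: (AM _ _ A1' A2').
      * move=> a [f A']; eexists; exact: (AV _ A').
    + move=> g x [f A']; eexists; exact: (AJ ([ffun => gone H], g) _ A').
  have Mab : is_abelian (@gmul G) M.
    move=> a b [f1 A1'] [f2 A2']; exact: (congr1 snd (Aab _ _ A1' A2')).
  apply: (hG M Msub Mab); last by case: w Aw => f g Aw; exists f.
  move=> x Mx.
  pose K := fun p => exists x, M x /\ sigma x = p.
  apply: (sym_abnorm (K := K) n5); last by exists x.
  + move=> _ r [y [My <-]]; have [g <-] := sur r.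
    exists (gmul (gmul g y) (ginv g)); split; first exact: Msub.2.
    by rewrite !hs homV.
  + move=> _ _ [a [Ma <-]] [b [Mb <-]]; by rewrite -!hs Mab.
Qed.
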